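(* Let $n\geq3$, $(R,\Lambda)$ a form ring, $C'\subseteq\mathrm{center}(R)$ a subring, $C$ the subring of $R$ of all finite sums of elements $c\bar c$ and $-c\bar c$ with $c\in C'$, and assume $R$ is a Noetherian $C$-module. Let $(I,\Gamma)$ be a form ideal of $(R,\Lambda)$ and let $g'\in U_{2n}(R,\Lambda)/U_{2n}((R,\Lambda),(I,\Gamma))$ be noncentral. Then there is a maximal ideal $m$ of $C$ such that $I\cap C\subseteq m$ and $\phi_m(g')$ is noncentral in $U_{2n}(R_m,\Lambda_m)/U_{2n}((R_m,\Lambda_m),(I_m,\Gamma_m))$.
   Context: Rings are associative with $1\neq0$; $r\mapsto\bar r$ is an involution on $R$ (additive, $\overline{rs}=\bar s\bar r$, $\bar{\bar r}=r$), $\lambda\in\mathrm{center}(R)$ with $\lambda\bar\lambda=1$. A form parameter is an additive subgroup $\Lambda$ with $\{r-\lambda\bar r\}\subseteq\Lambda\subseteq\{r:r=-\lambda\bar r\}$ and $r\Lambda\bar r\subseteq\Lambda$ for all $r$. A form ideal $(I,\Gamma)$: $I$ an ideal with $\bar I=I$, $\Gamma$ an additive subgroup with $\{\xi-\lambda\bar\xi:\xi\in I\}+\langle\zeta\alpha\bar\zeta:\zeta\in I,\alpha\in\Lambda\rangle\subseteq\Gamma\subseteq I\cap\Lambda$ and $\alpha\Gamma\bar\alpha\subseteq\Gamma$ for all $\alpha\in R$. Indices $\Omega=\{1,\dots,n,-n,\dots,-1\}$; for columns $u,v$: $\mathbbm{f}(u,v)=\sum_{i=1}^n\bar u_iv_{-i}$,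 $\mathbbm{h}(u,v)=\sum_{i=1}^n(\bar u_iv_{-i}+\lambda\bar u_{-i}v_i)$. $U_{2n}(R,\Lambda)$ = all $\sigma\in GL_{2n}(R)$ with $\mathbbm{h}(\sigma u,\sigma v)=\mathbbm{h}(u,v)$ and $\mathbbm{f}(\sigma u,\sigma u)-\mathbbm{f}(u,u)\in\Lambda$ for all $u,v$; $U_{2n}((R,\Lambda),(I,\Gamma))$ = the normal subgroup of $\sigma\in U_{2n}(R,\Lambda)$ with $\sigma\equiv e\pmod I$ and $\mathbbm{f}(\sigma u,\sigma u)-\mathbbm{f}(u,u)\in\Gamma$ for all $u$. Localization: $C$ is central and fixed pointwise by the involution. For a maximal ideal $m$ of $C$, $S_m=C\setminus m$, $R_m=S_m^{-1}R$ (with involution $\overline{r/s}=\bar r/s$ and $\lambda_m$ the image of $\lambda$), $\Lambda_m=S_m^{-1}\Lambda$, $I_m=S_m^{-1}I$, $\Gamma_m=S_m^{-1}\Gamma$. $F_m:U_{2n}(R,\Lambda)\to U_{2n}(R_m,\Lambda_m)$ applies the localization map $f_m:R\to R_m$ entrywise, and $\phi_m: U_{2n}(R,\Lambda)/U_{2n}((R,\Lambda),(I,\Gamma))\to U_{2n}(R_m,\Lambda_m)/U_{2n}((R_m,\Lambda_m),(I_m,\Gamma_m))$ is the homomorphism induced by $F_m$. *)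

(* Defs.v *)
From mathcomp Require Import all_boot all_algebra.
Set Implicit Arguments. Unset Strict Implicit. Unset Printing Implicit Defensive.
Import GRing.Theory.
Local Open Scope ring_scope.

Section FormRings.
Variable A : nzRingType.
Variable bar : A -> A.

Definition involution : Prop :=
  (forall r s, bar (r + s) = bar r + bar s) /\
  (forall r s, bar (r * s) = bar s * bar r) /\
  (forall r, bar (bar r) = r).

Definition central (x : A) : Prop := forall y, x * y = y * x.

Definition add_subgroup (P : A -> Prop) : Prop :=
  P 0 /\ (forall x y, P x -> P y -> P (x - y)).

Variable lam : A.

Definition form_constant : Prop := central lam /\ lam * bar lam = 1.

Definition form_parameter (L : A -> Prop) : Prop :=
  add_subgroup L /\
  (forall r, L (r - lam * bar r)) /\
  (forall a, L a -> a = - (lam * bar a)) /\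
  (forall r a, L a -> L (r * a * bar r)).

Definition form_ring (L : A -> Prop) : Prop :=
  involution /\ form_constant /\ form_parameter L.

Definition ideal (I : A -> Prop) : Prop :=
  add_subgroup I /\ (forall r x, I x -> I (r * x)) /\ (forall r x, I x -> I (x * r)).

Definition form_ideal (L I G : A -> Prop) : Prop :=
  ideal I /\ (forall x, I x <-> I (bar x)) /\
  add_subgroup G /\
  (forall xi, I xi -> G (xi - lam * bar xi)) /\
  (forall zeta alpha, I zeta -> L alpha -> G (zeta * alpha * bar zeta)) /\
  (forall g, G g -> I g /\ L g) /\
  (forall alpha g, G g -> G (alpha * g * bar alpha)).

Variable n : nat.

(* indices Omega = {1,..,n,-n,..,-1}: paper index (k+1) is position lshift n k,
   paper index -(k+1) is position rshift n (rev_ord k) (i.e. 2n-(k+1)). *)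
Definition ipos (k : 'I_n) : 'I_(n + n) := lshift n k.
Definition ineg (k : 'I_n) : 'I_(n + n) := rshift n (rev_ord k).

Definition fform (u v : 'cV[A]_(n + n)) : A :=
  \sum_(k < n) bar (u (ipos k) 0) * v (ineg k) 0.

Definition hform (u v : 'cV[A]_(n + n)) : A :=
  \sum_(k < n) (bar (u (ipos k) 0) * v (ineg k) 0
                + lam * bar (u (ineg k) 0) * v (ipos k) 0).

Definition invertible_mx (s : 'M[A]_(n + n)) : Prop :=
  exists t : 'M[A]_(n + n), s *m t = 1%:M /\ t *m s = 1%:M.

Definition inU (L : A -> Prop) (s : 'M[A]_(n + n)) : Prop :=
  invertible_mx s /\
  (forall u v, hform (s *m u) (s *m v) = hform u v) /\
  (forall u, L (fform (s *m u) (s *m u) - fform u u)).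

Definition inUrel (L I G : A -> Prop) (s : 'M[A]_(n + n)) : Prop :=
  inU L s /\
  (forall i j, I (s i j - (1%:M : 'M[A]_(n + n)) i j)) /\
  (forall u, G (fform (s *m u) (s *m u) - fform u u)).

(* the class of s in U_{2n}(R,Lambda)/U_{2n}((R,Lambda),(I,Gamma)) is
   noncentral: some class tau H does not commute with s H, i.e. there is no
   rho in H with s tau = tau s rho. *)
Definition noncentral_mod (L I G : A -> Prop) (s : 'M[A]_(n + n)) : Prop :=
  exists t, inU L t /\ ~ (exists rho, inUrel L I G rho /\ s *m t = t *m s *m rho).

End FormRings.

Section Central.
Variable R : nzRingType.

Definition subring (P : R -> Prop) : Prop :=
  P 1 /\ (forall x y, P x -> P y -> P (x - y)) /\ (forall x y, P x -> P y -> P (x * y)).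

Inductive sums_norms (bar : R -> R) (C' : R -> Prop) : R -> Prop :=
| SN0 : sums_norms bar C' 0
| SNadd c x : C' c -> sums_norms bar C' x -> sums_norms bar C' (c * bar c + x)
| SNsub c x : C' c -> sums_norms bar C' x -> sums_norms bar C' (x - c * bar c).

Definition C_submodule (C M : R -> Prop) : Prop :=
  add_subgroup M /\ (forall c x, C c -> M x -> M (c * x)).

Definition noetherian_module (C : R -> Prop) : Prop :=
  forall M, C_submodule C M ->
    exists gens : seq R, (forall x, x \in gens -> M x) /\
      forall x, M x -> exists cs : seq R, size cs = size gens /\
        (forall c, c \in cs -> C c) /\
        x = \sum_(i < size gens) cs`_i * gens`_i.

Definition ideal_of (C J : R -> Prop) : Prop :=
  (forall x, J x -> C x) /\ add_subgroup J /\
  (forall c x, C c -> J x -> J (c * x)).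

Definition maximal_ideal_of (C m : R -> Prop) : Prop :=
  ideal_of C m /\ ~ m 1 /\
  forall J, ideal_of C J -> (forall x, m x -> J x) ->
    (forall x, J x <-> m x) \/ (forall x, C x -> J x).

Definition compl_in (C m : R -> Prop) : R -> Prop := fun s => C s /\ ~ m s.

(* f : R -> B is (the map to) the localization S^{-1} R of R at the central
   multiplicative set S: images of S are units, every element of B is a
   fraction f r / f s, and f r = 0 iff s r = 0 for some s in S. *)
Definition is_localization (B : nzRingType) (S : R -> Prop)
    (f : {rmorphism R -> B}) : Prop :=
  (forall s, S s -> exists t, f s * t = 1 /\ t * f s = 1) /\
  (forall b, exists r s, S s /\ b * f s = f r) /\
  (forall r, f r = 0 -> exists s, S s /\ s * r = 0).

Definition loc_set (B : nzRingType) (S : R -> Prop) (f : R -> B)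
    (P : R -> Prop) : B -> Prop :=
  fun b => exists x s, P x /\ S s /\ b * f s = f x.

End Central.

(* Main.v *)
Require Import Defs.
From mathcomp Require Import all_boot all_algebra.
From Stdlib Require Import Classical ClassicalEpsilon.
Import GRing.Theory.
Local Open Scope ring_scope.
Set Implicit Arguments. Unset Strict Implicit.

Lemma as_add (A : nzRingType) (P : A -> Prop) : add_subgroup P ->
  forall x y, P x -> P y -> P (x + y).
Proof.
move=> [P0 PB] x y Px Py.
have Pny : P (- y) by rewrite -sub0r; apply: PB.
by rewrite -(opprK y); apply: PB.
Qed.

Lemma as_opp (A : nzRingType) (P : A -> Prop) : add_subgroup P ->
  forall x, P x -> P (- x).
Proof. by move=> [P0 PB] x Px; rewrite -sub0r; apply: PB. Qed.

Lemma inv_add (A : nzRingType) (bar : A -> A) : involution bar ->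
  forall r s, bar (r + s) = bar r + bar s.
Proof. by case. Qed.
Lemma inv_mul (A : nzRingType) (bar : A -> A) : involution bar ->
  forall r s, bar (r * s) = bar s * bar r.
Proof. by case=> _ []. Qed.
Lemma inv_inv (A : nzRingType) (bar : A -> A) : involution bar ->
  forall r, bar (bar r) = r.
Proof. by case=> _ []. Qed.

Lemma inv0 (A : nzRingType) (bar : A -> A) : involution bar -> bar 0 = 0.
Proof.
move=> hb; have := inv_add hb 0 0; rewrite addr0 => /eqP.
by rewrite -subr_eq0 opprD addrA subrr sub0r oppr_eq0 => /eqP.
Qed.

Lemma invN (A : nzRingType) (bar : A -> A) : involution bar -> forall x, bar (- x) = - bar x.
Proof.
move=> hb x; apply/eqP; rewrite -subr_eq0 opprK -inv_add // addNr inv0 //.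
Qed.

Lemma invB (A : nzRingType) (bar : A -> A) : involution bar -> forall x y, bar (x - y) = bar x - bar y.
Proof. by move=> hb x y; rewrite inv_add // invN. Qed.

Lemma inv1 (A : nzRingType) (bar : A -> A) : involution bar -> bar 1 = 1.
Proof.
move=> hb; transitivity (bar 1 * bar (bar 1)); first by rewrite inv_inv // mulr1.
by rewrite -inv_mul // mulr1 inv_inv.
Qed.

Lemma central_bar (A : nzRingType) (bar : A -> A) : involution bar ->
  forall c, central c -> central (bar c).
Proof.
move=> hb c hc y; rewrite -{1}(inv_inv hb y) -inv_mul // -hc inv_mul // inv_inv //.
Qed.

Lemma central_mul (A : nzRingType) (a b : A) : central a -> central b -> central (a * b).
Proof. by move=> ha hb y; rewrite -mulrA hb mulrA ha mulrA. Qed.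

Lemma SN_props (R : nzRingType) (bar : R -> R) (C' : R -> Prop) :
  involution bar -> (forall c, C' c -> central c) ->
  forall x, sums_norms bar C' x -> central x /\ bar x = x.
Proof.
move=> hb hc x; elim=> [|c y Cc _ [IH1 IH2]|c y Cc _ [IH1 IH2]].
- by split; [move=> y; rewrite mul0r mulr0 | exact: inv0].
- have cc : central (c * bar c) by apply: central_mul; [exact: (hc _ Cc)|apply: central_bar => //; exact: (hc _ Cc)].
  split; first by move=> z; rewrite mulrDl mulrDr cc IH1.
  by rewrite inv_add // IH2 inv_mul // inv_inv.
- have cc : central (c * bar c) by apply: central_mul; [exact: (hc _ Cc)|apply: central_bar => //; exact: (hc _ Cc)].
  split; first by move=> z; rewrite mulrBl mulrBr cc IH1.
  by rewrite invB // IH2 inv_mul // inv_inv.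
Qed.

Lemma SN_add (R : nzRingType) (bar : R -> R) (C' : R -> Prop) x y :
  sums_norms bar C' x -> sums_norms bar C' y -> sums_norms bar C' (x + y).
Proof.
elim=> [|c z Cc _ IH|c z Cc _ IH] Hy; first by rewrite add0r.
- by rewrite -addrA; apply: SNadd => //; apply: IH.
- by rewrite addrAC; apply: SNsub => //; apply: IH.
Qed.

Lemma SN_opp (R : nzRingType) (bar : R -> R) (C' : R -> Prop) x :
  sums_norms bar C' x -> sums_norms bar C' (- x).
Proof.
elim=> [|c z Cc _ IH|c z Cc _ IH]; first by rewrite oppr0; constructor.
- by rewrite opprD addrC; apply: SNsub.
- by rewrite opprB; apply: SNadd.
Qed.

Lemma SN_sub (R : nzRingType) (bar : R -> R) (C' : R -> Prop) x y :
  sums_norms bar C' x -> sums_norms bar C' y -> sums_norms bar C' (x - y).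
Proof. by move=> Hx Hy; apply: SN_add => //; apply: SN_opp. Qed.

Lemma SN_1 (R : nzRingType) (bar : R -> R) (C' : R -> Prop) :
  involution bar -> subring C' -> sums_norms bar C' 1.
Proof.
move=> hb [h1 _]; rewrite -[1]addr0 -{1}[1]mulr1 -{2}(inv1 hb); apply: SNadd => //; constructor.
Qed.

Lemma SN_mul (R : nzRingType) (bar : R -> R) (C' : R -> Prop) :
  involution bar -> subring C' -> (forall c, C' c -> central c) ->
  forall x y, sums_norms bar C' x -> sums_norms bar C' y -> sums_norms bar C' (x * y).
Proof.
move=> hb [_ [_ hm]] hc.
have key : forall c y, C' c -> sums_norms bar C' y -> sums_norms bar C' (c * bar c * y).
  move=> c y Cc.
  have e4 : forall d, c * bar c * (d * bar d) = c * d * (bar d * bar c).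
    move=> d; have hc' := central_bar hb (hc _ Cc).
    rewrite !mulrA -[c * bar c * d]mulrA (hc' d) mulrA.
    by rewrite -[c * d * bar c * bar d]mulrA (hc' (bar d)) mulrA.
  elim=> [|d z Cd _ IH|d z Cd _ IH]; first by rewrite mulr0; constructor.
  - have -> : c * bar c * (d * bar d + z) = (c * d) * bar (c * d) + c * bar c * z.
      by rewrite mulrDr (inv_mul hb) e4.
    by apply: SNadd => //; apply: hm.
  - have -> : c * bar c * (z - d * bar d) = c * bar c * z - (c * d) * bar (c * d).
      by rewrite mulrBr (inv_mul hb) e4.
    by apply: SNsub => //; apply: hm.
move=> x y; elim=> [|c z Cc _ IH|c z Cc _ IH] Hy; first by rewrite mul0r; constructor.
- by rewrite mulrDl; apply: SN_add; [apply: key|apply: IH].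
- by rewrite mulrBl; apply: SN_sub; [apply: IH|apply: key].
Qed.

Lemma SN_act (R : nzRingType) (bar : R -> R) (C' : R -> Prop) (P : R -> Prop) :
  involution bar -> (forall c, C' c -> central c) ->
  add_subgroup P -> (forall r a, P a -> P (r * a * bar r)) ->
  forall c x, sums_norms bar C' c -> P x -> P (c * x).
Proof.
move=> hb hc hP hPr c x; elim=> [|d z Cd _ IH|d z Cd _ IH] Px.
- by rewrite mul0r; case: hP.
- rewrite mulrDl; apply: as_add => //; last by apply: IH.
  by rewrite -mulrA (central_bar hb (hc _ Cd)) mulrA; apply: hPr.
- rewrite mulrBl; case: hP => _ hB; apply: hB; first by apply: IH.
  by rewrite -mulrA (central_bar hb (hc _ Cd)) mulrA; apply: hPr.
Qed.


Definition goodI (R : nzRingType) (C J0 J : R -> Prop) :=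
  ideal_of C J /\ ~ J 1 /\ (forall x, J0 x -> J x).

Lemma ideal_sum (R : nzRingType) (C J : R -> Prop) : ideal_of C J ->
  forall (gens cs : seq R), size cs = size gens ->
  (forall c, c \in cs -> C c) -> (forall x, x \in gens -> J x) ->
  J (\sum_(i < size gens) cs`_i * gens`_i).
Proof.
move=> [hJC [hJ hJm]] gens cs hs hcs hg.
apply: (big_rec (fun y => J y)); first by case: hJ.
move=> i y _ Jy; apply: as_add => //; apply: hJm.
  by apply: hcs; apply: mem_nth; rewrite hs.
by apply: hg; apply: mem_nth.
Qed.

Lemma exists_max (R : nzRingType) (C : R -> Prop) :
  noetherian_module C -> forall J0, ideal_of C J0 -> ~ J0 1 ->
  exists m, maximal_ideal_of C m /\ (forall x, J0 x -> m x).
Proof.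
move=> hN J0 hJ0 hJ01; apply: NNPP => hno.
have step : forall J, goodI C J0 J -> exists J', goodI C J0 J' /\
    (forall x, J x -> J' x) /\ exists x, J' x /\ ~ J x.
  move=> J [hJ [hJ1 hJJ0]].
  have : ~ maximal_ideal_of C J by move=> hm; apply: hno; exists J.
  move=> hnm; apply: NNPP => hne; apply: hnm; split => //; split => //.
  move=> J' hJ' hJJ'; apply: NNPP => hor; apply: hne; exists J'.
  have [x hx] : exists x, ~ (J' x <-> J x).
    by apply: not_all_ex_not => h; apply: hor; left.
  have [y hy] : exists y, ~ (C y -> J' y).
    by apply: not_all_ex_not => h; apply: hor; right.
  split; [split => //; split|split => //].
  - move=> h1; apply: hy => Cy; rewrite -[y]mulr1; case: hJ' => _ [_ hm]; exact: hm.
  - by move=> z /hJJ0 /hJJ'.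
  - exists x; split; last by move=> Jx; apply: hx; split => // _; apply: hJJ'.
    by apply: NNPP => nJ'x; apply: hx; split => // /hJJ'.
pose P J J' := goodI C J0 J' /\ (forall x, J x -> J' x) /\ exists x, J' x /\ ~ J x.
pose next J := epsilon (inhabits J0) (P J).
pose chain k := iter k next J0.
have good0 : goodI C J0 J0 by split => //.
have gstep : forall k, goodI C J0 (chain k) /\ P (chain k) (chain k.+1).
  elim=> [|k [g _]].
    have hP := epsilon_spec (inhabits J0) (P J0) (step _ good0).
    by split => //.
  have hP : P (chain k) (chain k.+1) := epsilon_spec (inhabits J0) (P (chain k)) (step _ g).
  case: hP => g' [h1 h2]; split => //.
  exact: (epsilon_spec (inhabits J0) (P (chain k.+1)) (step _ g')).
have mono : forall k l, (k <= l)%N -> forall x, chain k x -> chain l x.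
  move=> k l; elim: l => [|l IH]; first by rewrite leqn0 => /eqP ->.
  rewrite leq_eqVlt => /orP [/eqP -> //|hkl] x hx.
  by case: (gstep l) => _ [_ [hsub _]]; apply: hsub; apply: IH.
have idk : forall k, ideal_of C (chain k) by move=> k; case: (gstep k) => [[]].
pose U x := exists k, chain k x.
have hU : C_submodule C U.
  split; first split.
  - by exists 0%N; case: hJ0 => _ [[]].
  - move=> x y [k hx] [l hy]; exists (maxn k l).
    case: (idk (maxn k l)) => _ [[_ hB] _]; apply: hB.
      by apply: (mono k) hx; exact: leq_maxl.
    by apply: (mono l) hy; exact: leq_maxr.
  - move=> c x Cc [k hx]; exists k; case: (idk k) => _ [_ hm]; exact: hm.
have [gens [hg hall]] := hN U hU.
have [K hK] : exists K, forall x, x \in gens -> chain K x.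
  elim: gens hg {hall} => [|g gs IH] hg; first by exists 0%N.
  have [K1 hK1] := IH (fun x hx => hg x (etrans (in_cons _ _ _) (introT orP (or_intror hx)))).
  have [K2 hK2] := hg g (mem_head _ _).
  exists (maxn K1 K2) => x; rewrite in_cons => /orP [/eqP ->|hx].
    by apply: (mono K2) => //; exact: leq_maxr.
  by apply: (mono K1); [exact: leq_maxl| exact: hK1].
case: (gstep K) => _ [_ [_ [x [hx hnx]]]].
have [cs [hs [hcs e]]] := hall x (ex_intro _ K.+1 hx).
by apply: hnx; rewrite e; apply: ideal_sum.
Qed.

Lemma max_prime (R : nzRingType) (C m : R -> Prop) :
  add_subgroup C -> (forall x, C x -> central x) ->
  (forall x y, C x -> C y -> C (x * y)) -> C 1 ->
  maximal_ideal_of C m -> forall a b, C a -> C b -> m (a * b) -> ~ m a -> m b.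
Proof.
move=> hCa hcen hCm C1 [[hmC [hm hmm]] [hm1 hmax]] a b Ca Cb hab hna.
pose J x := exists z y, m z /\ C y /\ x = z + y * a.
have C0 : C 0 by case: hCa.
have m0 : m 0 by case: hm.
have hJ : ideal_of C J.
  split; first by move=> x [z [y [mz [Cy ->]]]]; apply: as_add => //; [exact: hmC|exact: hCm].
  split; first split.
  - by exists 0, 0; split => //; split => //; rewrite mul0r addr0.
  - move=> x x' [z [y [mz [Cy ->]]]] [z' [y' [mz' [Cy' ->]]]].
    exists (z - z'), (y - y'); split; first by case: hm => _; apply.
    split; first by case: hCa => _; apply.
    by rewrite mulrBl opprD addrACA.
  - move=> c x Cc [z [y [mz [Cy ->]]]]; exists (c * z), (c * y).
    split; first exact: hmm.
    by split; [exact: hCm|rewrite mulrDr mulrA].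
have mJ : forall x, m x -> J x by move=> x mx; exists x, 0; split => //; split => //; rewrite mul0r addr0.
case: (hmax J hJ mJ) => [h|h].
  exfalso; apply: hna; apply/h; exists 0, 1; split => //; split => //; by rewrite mul1r add0r.
have [z [y [mz [Cy e]]]] := h 1 C1.
have -> : b = b * z + y * (a * b).
  by rewrite mulrA -(hcen _ Cb (y * a)) -mulrDr -e mulr1.
apply: as_add => //; exact: hmm.
Qed.


Lemma local_fail (R : nzRingType) (C I P : R -> Prop) (a : R) :
  add_subgroup C -> (forall x, C x -> central x) ->
  (forall x y, C x -> C y -> C (x * y)) -> C 1 -> noetherian_module C ->
  add_subgroup P -> (forall c x, C c -> P x -> P (c * x)) -> ~ P a ->
  (forall c, I c -> C c -> P (c * c * a)) ->
  exists m, maximal_ideal_of C m /\ (forall x, I x -> C x -> m x) /\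
    forall (B : nzRingType) (f : {rmorphism R -> B}),
      is_localization (compl_in C m) f -> ~ loc_set (compl_in C m) f P (f a).
Proof.
move=> hCa hcen hCm C1 hN hP hPC hna hI.
pose Q c := C c /\ P (c * a).
have hQ : ideal_of C Q.
  split; first by move=> x [].
  split; first split.
  - by split; [case: hCa|rewrite mul0r; case: hP].
  - move=> x y [Cx Px] [Cy Py]; split; first by case: hCa => _; apply.
    by rewrite mulrBl; case: hP => _; apply.
  - move=> c x Cc [Cx Px]; split; first exact: hCm.
    by rewrite -mulrA; apply: hPC.
have hQ1 : ~ Q 1 by case=> _; rewrite mul1r.
have [m [hm hQm]] := exists_max hN hQ hQ1.
have hprime := max_prime hCa hcen hCm C1 hm.
have hmC : forall x, m x -> C x by case: hm => [[]].
exists m; split => //; split.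
  move=> x Ix Cx; apply: NNPP => nmx.
  apply: (nmx); apply: (hprime x x Cx Cx _ nmx); apply: hQm; split; [exact: hCm|exact: hI].
move=> B f [hl1 [hl2 hl3]] [x [s [Px [[Cs nms] e]]]].
have : f (a * s - x) = 0 by rewrite rmorphB rmorphM e subrr.
move=> /hl3 [s2 [[Cs2 nms2] e2]].
have hQ2 : Q (s2 * s).
  split; first exact: hCm.
  have -> : s2 * s * a = s2 * x.
    by apply/eqP; rewrite -subr_eq0 -mulrA (hcen _ Cs a) -mulrBr e2 eqxx.
  exact: (hPC _ _ Cs2 Px).
by apply: (nms); apply: (hprime s2 s Cs2 Cs _ nms2); apply: hQm.
Qed.


Lemma inU_mul (A : nzRingType) (bar : A -> A) (lam : A) (L : A -> Prop) n
  (s t : 'M[A]_(n + n)) : add_subgroup L ->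
  inU bar lam L s -> inU bar lam L t -> inU bar lam L (s *m t).
Proof.
move=> hL [[s' [e1 e2]] [hs1 hs2]] [[t' [f1 f2]] [ht1 ht2]].
split; first (exists (t' *m s'); split).
- by rewrite -mulmxA [t *m (t' *m s')]mulmxA f1 mul1mx e1.
- by rewrite -mulmxA [s' *m (s *m t)]mulmxA e2 mul1mx f2.
split; first by move=> u v; rewrite -[s *m t *m u]mulmxA -[s *m t *m v]mulmxA hs1 ht1.
move=> u; rewrite -[s *m t *m u]mulmxA.
have e : forall a b c : A, a - c = (a - b) + (b - c) by move=> a b c; rewrite addrA subrK.
rewrite (e _ (fform bar (t *m u) (t *m u))).
by apply: as_add => //.
Qed.

Lemma inU_inv (A : nzRingType) (bar : A -> A) (lam : A) (L : A -> Prop) n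
  (s s' : 'M[A]_(n + n)) : add_subgroup L ->
  inU bar lam L s -> s *m s' = 1%:M -> s' *m s = 1%:M -> inU bar lam L s'.
Proof.
move=> hL [_ [hs1 hs2]] e1 e2.
split; first by exists s.
split.
  by move=> u v; rewrite -(hs1 (s' *m u) (s' *m v)) !mulmxA e1 !mul1mx.
move=> u; have := hs2 (s' *m u); rewrite mulmxA e1 mul1mx => h.
by rewrite -opprB; apply: as_opp.
Qed.

Lemma fform_map (R B : nzRingType) (bar : R -> R) (barB : B -> B)
  (f : {rmorphism R -> B}) n (u v : 'cV[R]_(n + n)) :
  (forall r, barB (f r) = f (bar r)) ->
  fform barB (map_mx f u) (map_mx f v) = f (fform bar u v).
Proof.
move=> hbB; rewrite /fform rmorph_sum; apply: eq_bigr => k _.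
by rewrite rmorphM !mxE hbB.
Qed.

Lemma hform_map (R B : nzRingType) (bar : R -> R) (barB : B -> B) (lam : R)
  (f : {rmorphism R -> B}) n (u v : 'cV[R]_(n + n)) :
  (forall r, barB (f r) = f (bar r)) ->
  hform barB (f lam) (map_mx f u) (map_mx f v) = f (hform bar lam u v).
Proof.
move=> hbB; rewrite /hform rmorph_sum; apply: eq_bigr => k _.
by rewrite rmorphD !rmorphM !mxE !hbB.
Qed.

Definition scv (R B : nzRingType) (f : R -> B) n (w : 'cV[B]_(n + n))
  (v : 'cV[R]_(n + n)) (t : B) := forall i, w i 0 = f (v i 0) * t.

Lemma scv_mul (R B : nzRingType) (f : {rmorphism R -> B}) n
  (w : 'cV[B]_(n + n)) v t (sg : 'M[R]_(n + n)) :
  scv f w v t -> scv f (map_mx f sg *m w) (sg *m v) t.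
Proof.
move=> h i; rewrite !mxE rmorph_sum mulr_suml; apply: eq_bigr => k _.
by rewrite h !mxE rmorphM mulrA.
Qed.

Lemma fform_scv (R B : nzRingType) (bar : R -> R) (barB : B -> B)
  (f : {rmorphism R -> B}) n (w w' : 'cV[B]_(n + n)) v v' t t' :
  involution barB -> (forall r, barB (f r) = f (bar r)) ->
  barB t = t -> central t ->
  scv f w v t -> scv f w' v' t' ->
  fform barB w w' = t * f (fform bar v v') * t'.
Proof.
move=> hiB hbB hbt hct h h'; rewrite /fform rmorph_sum mulr_sumr mulr_suml.
apply: eq_bigr => k _; rewrite (h (ipos k)) (h' (ineg k)). rewrite (inv_mul hiB) hbt hbB rmorphM.
set a := f _; set b := f _.
by rewrite (mulrA (t * a)) (mulrA t a b).
Qed.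

Lemma hform_scv (R B : nzRingType) (bar : R -> R) (barB : B -> B) (lam : R)
  (f : {rmorphism R -> B}) n (w w' : 'cV[B]_(n + n)) v v' t t' :
  involution barB -> (forall r, barB (f r) = f (bar r)) ->
  barB t = t -> central t ->
  scv f w v t -> scv f w' v' t' ->
  hform barB (f lam) w w' = t * f (hform bar lam v v') * t'.
Proof.
move=> hiB hbB hbt hct h h'; rewrite /hform rmorph_sum mulr_sumr mulr_suml.
apply: eq_bigr => k _.
rewrite (h (ipos k)) (h (ineg k)) (h' (ipos k)) (h' (ineg k)).
rewrite !(inv_mul hiB) hbt !hbB rmorphD !rmorphM.
set a := f (bar _); set b := f (v' _ _); set c := f (bar _); set d := f (v' _ _).
set l := f lam.
rewrite mulrDr mulrDl (mulrA (t * a)) (mulrA t a b).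
congr (_ + _).
rewrite (mulrA l t c) -(hct l) (mulrA (t * l * c) d t') -(mulrA t l c).
by rewrite -(mulrA t (l * c) d).
Qed.


Lemma inv_central (B : nzRingType) (x t : B) :
  central x -> x * t = 1 -> t * x = 1 -> central t.
Proof.
move=> hx e1 e2 y.
by rewrite -[t * y]mulr1 -e1 mulrA -(mulrA t) -hx mulrA e2 mul1r.
Qed.

Lemma loc_central (R B : nzRingType) (S : R -> Prop) (f : {rmorphism R -> B}) :
  is_localization S f -> (forall s, S s -> central s) ->
  forall c, central c -> central (f c).
Proof.
move=> [hl1 [hl2 _]] hSc c hc y.
have [r [s0 [Ss0 e]]] := hl2 y.
have [t0 [e1 e2]] := hl1 _ Ss0.
have ct : f c * t0 = t0 * f c.
  rewrite -[t0 * f c]mulr1 -e1 !mulrA -(mulrA t0) -rmorphM (hc s0) rmorphM.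
  by rewrite mulrA e2 mul1r.
have ey : y = f r * t0 by rewrite -e -mulrA e1 mulr1.
by rewrite ey mulrA -rmorphM hc rmorphM -!mulrA ct.
Qed.

Lemma cden (R B : nzRingType) (S : R -> Prop) (f : {rmorphism R -> B}) n :
  is_localization S f -> S 1 -> (forall a b, S a -> S b -> S (a * b)) ->
  (forall s, S s -> central s) ->
  forall w : 'cV[B]_(n + n), exists s (v : 'cV[R]_(n + n)),
    S s /\ forall i, w i 0 * f s = f (v i 0).
Proof.
move=> [hl1 [hl2 _]] S1 Sm hSc w.
suff : forall l : seq 'I_(n + n), exists s (v : 'cV[R]_(n + n)),
    S s /\ forall i, i \in l -> w i 0 * f s = f (v i 0).
  move=> /(_ (enum 'I_(n + n))) [s [v [Ss hv]]]; exists s, v; split => // i.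
  by apply: hv; rewrite mem_enum.
elim=> [|j l [s [v [Ss hv]]]]; first by exists 1, 0.
have [r [s0 [Ss0 e]]] := hl2 (w j 0).
exists (s * s0), (\col_i (if i == j then r * s else v i 0 * s0)).
split; first exact: Sm.
move=> i; rewrite in_cons mxE; case: eqP => [-> _|_ /= hi].
  by rewrite (hSc _ Ss s0) !rmorphM mulrA e.
by rewrite !rmorphM mulrA hv.
Qed.


Lemma den_lemma (R B : nzRingType) (bar : R -> R) (barB : B -> B)
  (S : R -> Prop) (f : {rmorphism R -> B}) n :
  is_localization S f -> S 1 -> (forall a b, S a -> S b -> S (a * b)) ->
  (forall s, S s -> central s) -> (forall s, S s -> bar s = s) ->
  involution barB -> (forall r, barB (f r) = f (bar r)) ->
  forall u : 'cV[B]_(n + n), exists s1 v1 t1, S s1 /\ f s1 * t1 = 1 /\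
    t1 * f s1 = 1 /\ scv f u v1 t1 /\ barB t1 = t1 /\ central t1.
Proof.
move=> hl S1 Sm hSc hSb hiB hbB u.
have [s1 [v1 [Ss1 hv]]] := cden hl S1 Sm hSc u.
have [t1 [e1 e2]] := (proj1 hl) _ Ss1.
exists s1, v1, t1; do 3 (split => //); split.
  by move=> i; rewrite -hv -mulrA e1 mulr1.
have hbs : barB (f s1) = f s1 by rewrite hbB hSb.
have hl1 : barB t1 * f s1 = 1 by rewrite -hbs -inv_mul // e1 inv1.
split; first by rewrite -[barB t1]mulr1 -e1 mulrA hl1 mul1r.
apply: inv_central e1 e2; exact: (loc_central hl hSc (hSc _ Ss1)).
Qed.

Lemma B_part (R B : nzRingType) (bar : R -> R) (barB : B -> B) (lam : R)
  (L S : R -> Prop) (f : {rmorphism R -> B}) n (sg : 'M[R]_(n + n)) :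
  is_localization S f -> S 1 -> (forall a b, S a -> S b -> S (a * b)) ->
  (forall s, S s -> central s) -> (forall s, S s -> bar s = s) ->
  involution barB -> (forall r, barB (f r) = f (bar r)) ->
  inU bar lam L sg -> inU barB (f lam) (loc_set S f L) (map_mx f sg).
Proof.
move=> hl S1 Sm hSc hSb hiB hbB [[sg' [e1 e2]] [hs1 hs2]].
have hden := den_lemma hl S1 Sm hSc hSb hiB hbB.
split; first by exists (map_mx f sg'); rewrite -!map_mxM e1 e2 map_mx1.
split.
  move=> u v.
  have [s1 [v1 [t1 [Ss1 [e11 [e12 [hu [hb1 hc1]]]]]]]] := hden n u.
  have [s2 [v2 [t2 [Ss2 [e21 [e22 [hv [hb2 hc2]]]]]]]] := hden n v.
  rewrite (hform_scv lam hiB hbB hb1 hc1 (scv_mul sg hu) (scv_mul sg hv)).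
  by rewrite hs1 (hform_scv lam hiB hbB hb1 hc1 hu hv).
move=> u.
have [s1 [v1 [t1 [Ss1 [e11 [e12 [hu [hb1 hc1]]]]]]]] := hden n u.
rewrite (fform_scv hiB hbB hb1 hc1 (scv_mul sg hu) (scv_mul sg hu)).
rewrite (fform_scv hiB hbB hb1 hc1 hu hu) -mulrBl -mulrBr -rmorphB.
set d := fform bar _ _ - _.
exists d, (s1 * s1); split; first exact: hs2.
split; first exact: Sm.
rewrite (hc1 (f d)) rmorphM -!mulrA (mulrA t1 (f s1)) e12 mul1r e12.
by rewrite mulr1.
Qed.

Unset Implicit Arguments.

Theorem lemma4p1 (R : nzRingType) (bar : R -> R) (lam : R)
    (L C' I G : R -> Prop) (n : nat) (s : 'M[R]_(n + n)) :
  (3 <= n)%N ->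
  form_ring bar lam L ->
  subring C' -> (forall c, C' c -> central c) ->
  noetherian_module (sums_norms bar C') ->
  form_ideal bar lam L I G ->
  inU bar lam L s ->
  noncentral_mod bar lam L I G s ->
  exists m : R -> Prop,
    maximal_ideal_of (sums_norms bar C') m /\
    (forall x, I x -> sums_norms bar C' x -> m x) /\
    forall (B : nzRingType) (barB : B -> B) (f : {rmorphism R -> B}),
      is_localization (compl_in (sums_norms bar C') m) f ->
      involution barB -> (forall r, barB (f r) = f (bar r)) ->
      noncentral_mod barB (f lam)
        (loc_set (compl_in (sums_norms bar C') m) f L)
        (loc_set (compl_in (sums_norms bar C') m) f I)
        (loc_set (compl_in (sums_norms bar C') m) f G)
        (map_mx f s).
Proof.
move=> hn [hb [[hlc hll] [hL [hLmin [hLmax hLr]]]]] hC' hc hN.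
move=> [[hIa [hIl hIr]] [hIbar [hGa [hGxi [hGza [hGIL hGr]]]]]] hs [t [ht hnot]].
set C := sums_norms bar C'.
have hCa : add_subgroup C by split; [constructor|move=> x y; apply: SN_sub].
have hcen : forall x, C x -> central x by move=> x h; case: (SN_props hb hc h).
have hCb : forall x, C x -> bar x = x by move=> x h; case: (SN_props hb hc h).
have hCm := SN_mul hb hC' hc.
have C1 := SN_1 hb hC'.
have [[s' [es1 es2]] _] := hs.
have [[t' [et1 et2]] _] := ht.
pose r0 := s' *m t' *m (s *m t).
have hr0 : inU bar lam L r0.
  apply: inU_mul => //; last exact: inU_mul.
  by apply: inU_mul => //; [exact: (inU_inv hL hs es1 es2)|exact: (inU_inv hL ht et1 et2)].
have eqr0 : s *m t = t *m s *m r0.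
  by rewrite /r0 !mulmxA -(mulmxA t s s') es1 mulmx1 et1 mul1mx.
have hnr : ~ inUrel bar lam L I G r0 by move=> h; apply: hnot; exists r0.
have finish : forall m, maximal_ideal_of C m -> (forall x, I x -> C x -> m x) ->
   (forall (B : nzRingType) (barB : B -> B) (f : {rmorphism R -> B}),
      is_localization (compl_in C m) f ->
      involution barB -> (forall r, barB (f r) = f (bar r)) ->
      ~ inUrel barB (f lam) (loc_set (compl_in C m) f L)
        (loc_set (compl_in C m) f I) (loc_set (compl_in C m) f G) (map_mx f r0)) ->
   exists m : R -> Prop,
    maximal_ideal_of C m /\
    (forall x, I x -> C x -> m x) /\
    forall (B : nzRingType) (barB : B -> B) (f : {rmorphism R -> B}),
      is_localization (compl_in C m) f ->
      involution barB -> (forall r, barB (f r) = f (bar r)) ->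
      noncentral_mod barB (f lam)
        (loc_set (compl_in C m) f L)
        (loc_set (compl_in C m) f I)
        (loc_set (compl_in C m) f G)
        (map_mx f s).
  move=> m hm hIm hfail; exists m; split => //; split => //.
  move=> B barB f hl hiB hbB.
  have hprime := max_prime hCa hcen hCm C1 hm.
  have S1 : compl_in C m 1 by split => //; case: hm => _ [].
  have Sm : forall a b, compl_in C m a -> compl_in C m b -> compl_in C m (a * b).
    move=> a b [Ca na] [Cb nb]; split; first exact: hCm.
    by move=> hab; apply: nb; apply: (hprime a b Ca Cb hab na).
  have hSc : forall x, compl_in C m x -> central x by move=> x [/hcen].
  have hSb : forall x, compl_in C m x -> bar x = x by move=> x [/hCb].
  exists (map_mx f t); split; first exact: (B_part hl S1 Sm hSc hSb hiB hbB ht).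
  move=> [rho [hrho e]]; apply: (hfail B barB f hl hiB hbB).
  have h1 : map_mx f (s' *m t' *m (t *m s)) = 1%:M.
    by rewrite !mulmxA -(mulmxA s' t' t) et2 mulmx1 es2 map_mx1.
  have -> : map_mx f r0 = rho.
    transitivity (map_mx f (s' *m t' *m (t *m s)) *m rho); last by rewrite h1 mul1mx.
    rewrite map_mxM -mulmxA [map_mx f (t *m s)]map_mxM -e.
    by rewrite -!map_mxM.
  exact: hrho.
have [hr0U [hr0h hr0L]] := hr0.
case: (classic (exists i j, ~ I (r0 i j - (1%:M : 'M[R]_(n + n)) i j))).
  move=> [i [j hij]].
  have hPC : forall c x, C c -> I x -> I (c * x) by move=> c x _; apply: hIl.
  have hII : forall c, I c -> C c -> I (c * c * (r0 i j - (1%:M : 'M[R]_(n + n)) i j)).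
    by move=> c Ic _; apply: (hIr); apply: (hIr).
  have [m [hm [hIm hloc]]] := local_fail hCa hcen hCm C1 hN hIa hPC hij hII.
  apply: finish hm hIm _ => B barB f hl hiB hbB [_ [hE _]].
  apply: (hloc B f hl); have := hE i j.
  by rewrite rmorphB !mxE rmorphMn rmorph1.
move=> hE.
have hE' : forall i j, I (r0 i j - (1%:M : 'M[R]_(n + n)) i j).
  by move=> i j; apply: NNPP => h; apply: hE; exists i, j.
have [u hu] : exists u, ~ G (fform bar (r0 *m u) (r0 *m u) - fform bar u u).
  by apply: not_all_ex_not => h; apply: hnr; split.
have hPC : forall c x, C c -> G x -> G (c * x).
  by move=> c x; apply: (SN_act hb hc hGa hGr).
have hII : forall c, I c -> C c -> G (c * c * (fform bar (r0 *m u) (r0 *m u) - fform bar u u)).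
  move=> c Ic Cc; have := hGza c _ Ic (hr0L u).
  by rewrite (hCb c Cc) -mulrA -(hcen c Cc) mulrA.
have [m [hm [hIm hloc]]] := local_fail hCa hcen hCm C1 hN hGa hPC hu hII.
apply: finish hm hIm _ => B barB f hl hiB hbB [_ [_ hG]].
apply: (hloc B f hl); have := hG (map_mx f u).
by rewrite -map_mxM !(fform_map _ _ hbB) rmorphB.
Qed.
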